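(* Let $G \ge 2$ be an integer and $p_t \in (0,1)$. Let $r_{t,1},\dots,r_{t,G}$ be i.i.d. $\mathrm{Bernoulli}(p_t)$ random variables, let $R=\sum_{j=1}^G r_{t,j}$, $\hat p_t = R/G$, and for $i\in[G]$ let $\hat A_{t,i} = r_{t,i}-\hat p_t$ and $A_{t,i} = r_{t,i}-p_t$. Let $\mathcal S=\{1\le R\le G-1\}$. Then for every $i\in[G]$: $\mathbb E[\hat A_{t,i}-A_{t,i}\mid \mathcal S] < 0$ if $p_t<1/2$; $\mathbb E[\hat A_{t,i}-A_{t,i}\mid \mathcal S] > 0$ if $p_t>1/2$; and $\mathbb E[\hat A_{t,i}-A_{t,i}\mid \mathcal S] = 0$ if and only if $p_t=1/2$.
   Context: Setting: for a prompt, $G$ responses are sampled independently from a policy; each response gets a binary reward, modeled as i.i.d. Bernoulli with success probability $p_t$ (the expected reward). $\hat p_t$ is the group baseline, $\hat A_{t,i}$ the group-relative advantage, $A_{t,i}$ the expected advantage, and $\mathcal S$ the non-degenerate event that the group is neither all-correct nor all-incorrect. *)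

(* Defs.v *)
(* discrete probability on the finite sample space
   {ffun 'I_G -> bool} of reward vectors (r_1,...,r_G). *)
From mathcomp Require Import all_boot all_order all_algebra.
Unset Printing Implicit Defensive.
Import Order.TTheory GRing.Theory Num.Theory.
Local Open Scope ring_scope.

Section GRPO.
Variables (R : realFieldType) (G : nat).

Definition outcome := {ffun 'I_G -> bool}.

Definition bern_prob (p : R) (r : outcome) : R :=
  \prod_(j < G) (if r j then p else 1 - p).

Definition rew (r : outcome) (j : 'I_G) : R := (r j)%:R.

Definition nsucc (r : outcome) : nat := \sum_(j < G) nat_of_bool (r j).

Definition phat (r : outcome) : R := (nsucc r)%:R / G%:R.

Definition Ahat (i : 'I_G) (r : outcome) : R := rew r i - phat r.
Definition Aexp (p : R) (i : 'I_G) (r : outcome) : R := rew r i - p.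

Definition nondeg (r : outcome) : bool := (1 <= nsucc r <= G - 1)%N.

Definition cond_exp (p : R) (S : pred outcome) (X : outcome -> R) : R :=
  (\sum_(r | S r) bern_prob p r * X r) / (\sum_(r | S r) bern_prob p r).

End GRPO.

(* Main.v *)
Require Import Defs.
From mathcomp Require Import all_boot all_order all_algebra.
From mathcomp Require Import ring lra zify.
Import Order.TTheory GRing.Theory Num.Theory.
Local Open Scope ring_scope.

Section Aux.
Variables (R : realFieldType) (G : nat) (p : R).
Local Notation bern_prob := (@bern_prob R G).
Local Notation rew := (@rew R G).
Local Notation phat := (@phat R G).
Local Notation nsucc := (@nsucc G).
Local Notation nondeg := (@nondeg G).
Local Notation outcome := (@outcome G).

Lemma sumP : \sum_(r : outcome) bern_prob p r = 1.
Proof.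
rewrite /bern_prob -(bigA_distr_bigA (fun (j : 'I_G) (b : bool) => if b then p else 1 - p)).
rewrite big1 // => j _; rewrite big_bool /=; ring.
Qed.

Lemma sumPr (j : 'I_G) : \sum_(r : outcome) bern_prob p r * rew r j = p.
Proof.
transitivity (\sum_(r : outcome) \prod_(k < G)
   (fun (k : 'I_G) (b : bool) => if k == j then (if b then p else 0) else (if b then p else 1 - p)) k (r k)).
  apply: eq_bigr => r _; rewrite /bern_prob /rew (bigD1 j) //= [RHS](bigD1 j) //= eqxx.
  have -> : \prod_(i < G | i != j) (if r i then p else 1 - p) =
            \prod_(i < G | i != j) (if i == j then (if r i then p else 0) else (if r i then p else 1 - p)).
    by apply: eq_bigr => k /negbTE ->.
  by case: (r j) => /=; rewrite ?mulr1 ?mulr0 ?mul0r.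
rewrite -(bigA_distr_bigA (fun (k : 'I_G) (b : bool) => if k == j then (if b then p else 0) else (if b then p else 1 - p))).
rewrite (bigD1 j) //= [X in _ * X]big1 ?mulr1; first by rewrite big_bool /= eqxx addr0.
by move=> k /negbTE kj; rewrite big_bool /= kj; ring.
Qed.

Lemma sumPphat (hG : (0 < G)%N) : \sum_(r : outcome) bern_prob p r * phat r = p.
Proof.
have G0 : G%:R != 0 :> R by rewrite pnatr_eq0 -lt0n.
transitivity ((\sum_(j < G) \sum_(r : outcome) bern_prob p r * rew r j) / G%:R).
  rewrite exchange_big mulr_suml; apply: eq_bigr => r _.
  rewrite /phat /nsucc natr_sum mulrA mulr_sumr; congr (_ / _).
by under eq_bigr do rewrite sumPr; rewrite sumr_const card_ord -[p *+ G]mulr_natr mulfK.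
Qed.

Definition f0 : outcome := [ffun => false].
Definition f1 : outcome := [ffun => true].

Lemma nsucc_f0 : nsucc f0 = 0%N.
Proof. by rewrite /nsucc big1 // => j _; rewrite ffunE. Qed.

Lemma nsucc_f1 : nsucc f1 = G.
Proof. by rewrite /nsucc (eq_bigr (fun _ => 1%N)) ?sum1_card ?card_ord // => j _; rewrite ffunE. Qed.

Lemma nsucc_compl (r : outcome) : (\sum_(j < G) nat_of_bool (~~ r j) + nsucc r)%N = G.
Proof.
rewrite /nsucc -big_split /= (eq_bigr (fun _ => 1%N)) ?sum1_card ?card_ord //.
by move=> j _; case: (r j).
Qed.

Lemma nondegE (hG : (2 <= G)%N) (r : outcome) : ~~ nondeg r = (r == f0) || (r == f1).
Proof.
rewrite /nondeg.
have hc := nsucc_compl r.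
apply/idP/idP.
- rewrite negb_and -leqNgt -ltnNge => /orP [h0|h1].
  + apply/orP; left; apply/eqP/ffunP => j; rewrite ffunE.
    have : (nsucc r == 0)%N by rewrite -leqn0.
    rewrite /nsucc sum_nat_eq0 => /forallP /(_ j) /=.
    by case: (r j).
  + apply/orP; right; apply/eqP/ffunP => j; rewrite ffunE.
    have : (\sum_(j < G) nat_of_bool (~~ r j) == 0)%N by apply/eqP; lia.
    rewrite sum_nat_eq0 => /forallP /(_ j) /=.
    by case: (r j).
- by case/orP => /eqP ->; rewrite ?nsucc_f0 ?nsucc_f1 //; apply/negP => /andP [_]; lia.
Qed.

Lemma f0f1 (hG : (0 < G)%N) : f0 != f1.
Proof.
apply/eqP => /ffunP /(_ (Ordinal hG)); by rewrite !ffunE.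
Qed.

Lemma split_sum (hG : (2 <= G)%N) (F : outcome -> R) :
  \sum_(r | nondeg r) F r = \sum_r F r - F f0 - F f1.
Proof.
rewrite [\sum_r F r](bigID nondeg) /=.
have -> : \sum_(i | ~~ nondeg i) F i = F f0 + F f1.
  rewrite (eq_bigl (fun r => (r == f0) || (r == f1))); last by move=> r; rewrite nondegE.
  rewrite (bigD1 f0) ?eqxx //=.
  rewrite (eq_bigl (fun r => r == f1)) ?big_pred1_eq //.
  move=> r /=; case: eqP => [->|_] /=; last by rewrite andbT.
  by rewrite (negbTE (f0f1 _)) //; lia.
ring.
Qed.

Lemma bern_f0 : bern_prob p f0 = (1 - p) ^+ G.
Proof.
by rewrite /bern_prob (eq_bigr (fun _ => 1 - p)) ?prodr_const ?card_ord // => j _; rewrite ffunE.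
Qed.

Lemma bern_f1 : bern_prob p f1 = p ^+ G.
Proof.
by rewrite /bern_prob (eq_bigr (fun _ => p)) ?prodr_const ?card_ord // => j _; rewrite ffunE.
Qed.

End Aux.
Arguments f0 {G}. Arguments f1 {G}.

Theorem theorem1 (R : realFieldType) (G : nat) (p : R)
  (hG : (2 <= G)%N) (hp0 : 0 < p) (hp1 : p < 1) (i : 'I_G) :
  let E := @cond_exp R G p (@nondeg G) (fun r => @Ahat R G i r - @Aexp R G p i r) in
  (p < 1 / 2 -> E < 0) /\ (1 / 2 < p -> 0 < E) /\ (E = 0 <-> p = 1 / 2).
Proof.
move=> E.
have G0 : (0 < G)%N by lia.
pose N := p ^+ G * (1 - p) - p * (1 - p) ^+ G.
pose D := \sum_(r | @nondeg G r) @bern_prob R G p r.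
have hN : \sum_(r | @nondeg G r) @bern_prob R G p r * (@Ahat R G i r - @Aexp R G p i r) = N.
  have -> : \sum_(r | @nondeg G r) @bern_prob R G p r * (@Ahat R G i r - @Aexp R G p i r) =
            \sum_(r | @nondeg G r) (@bern_prob R G p r * p - @bern_prob R G p r * @phat R G r).
    by apply: eq_bigr => r _; rewrite /Ahat /Aexp; ring.
  rewrite split_sum // sumrB -mulr_suml sumP sumPphat //.
  rewrite bern_f0 bern_f1 /phat nsucc_f0 nsucc_f1 mul0r divff ?pnatr_eq0 -?lt0n //.
  rewrite /N; ring.
have hD : 0 < D.
  pose g : outcome G := [ffun j => j == i].
  have gnd : @nondeg G g.
    rewrite /nondeg /nsucc (bigD1 i) //= big1 ?ffunE ?eqxx /=; first by lia.
    by move=> j /negbTE; rewrite ffunE => ->.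
  have pos : forall r, 0 < @bern_prob R G p r.
    move=> r; apply: prodr_gt0 => j _; case: (r j); lra.
  rewrite /D (bigD1 g) //=; apply: ltr_wpDr; last exact: pos.
  by apply: sumr_ge0 => r _; apply/ltW/pos.
have hE : E = N / D by rewrite /E /cond_exp hN.
have key : forall a b : R, 0 < a -> a < b -> a ^+ G * b - a * b ^+ G < 0.
  move=> a b a0 ab; case: G hG {G0 N D hN hD hE E i} => [|k] // hk.
  have h1 : a ^+ k < b ^+ k by rewrite ltrXn2r ?ltW //; case: k hk.
  have b0 : 0 < b by lra.
  rewrite !exprS.
  have -> : a * a ^+ k * b - a * (b * b ^+ k) = a * b * (a ^+ k - b ^+ k) by ring.
  by rewrite pmulr_rlt0 ?subr_lt0 // mulr_gt0.
have Dinv : 0 < D^-1 by rewrite invr_gt0.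
have lt : p < 1 / 2 -> E < 0.
  move=> h; rewrite hE pmulr_llt0 //; apply: key => //; lra.
have gt : 1 / 2 < p -> 0 < E.
  move=> h; rewrite hE pmulr_lgt0 //.
  have := key (1 - p) p ltac:(lra) ltac:(lra).
  rewrite /N; lra.
split => //; split => //; split.
- move=> E0; case: (ltrgtP p (1/2)) => // h.
  + by have := lt h; rewrite E0 ltxx.
  + by have := gt h; rewrite E0 ltxx.
- move=> hp; rewrite hE /N hp.
  have -> : 1 - 1/2 = 1/2 :> R by field.
  by rewrite [_ ^+ G * _]mulrC subrr mul0r.
Qed.
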